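(* For the iterates defined below, $$\|v_n\|_2\ge\sqrt{\eta}\cdot\Big(\sum_{i=1}^n\langle\phi(x_i),v_{i-1}\rangle^2\Big)^{1/2}.$$
   Context: Setting: $\phi(x_1),\dots,\phi(x_n)\in\mathbb{R}^d$ are feature vectors of samples $x_1,\dots,x_n$; $\eta\in(0,0.1)$ is a learning rate; $v_0\in\mathbb{R}^d$ is nonzero and $v_i=v_{i-1}+\eta\langle\phi(x_i),v_{i-1}\rangle\phi(x_i)$ for $i\in[n]$. *)

(* Defs.v *)
From HB Require Import structures.
From mathcomp Require Import all_boot all_order all_algebra.
Set Implicit Arguments. Unset Strict Implicit. Unset Printing Implicit Defensive.
Import Order.TTheory GRing.Theory Num.Theory.
Local Open Scope ring_scope.

Definition dotv {R : rcfType} {d : nat} (u v : 'rV[R]_d) : R :=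
  \sum_(k < d) u 0 k * v 0 k.

Definition norm2 {R : rcfType} {d : nat} (v : 'rV[R]_d) : R := Num.sqrt (dotv v v).

(* Iterates: v_0 given, v_i = v_{i-1} + eta <phi(x_i), v_{i-1}> phi(x_i), i >= 1.
   Samples are indexed x_1, x_2, ... by a function on nat (x 0 unused). *)
Fixpoint oja_iter {R : rcfType} {d : nat} {X : Type} (phi : X -> 'rV[R]_d)
    (x : nat -> X) (eta : R) (v0 : 'rV[R]_d) (i : nat) : 'rV[R]_d :=
  match i with
  | 0 => v0
  | j.+1 => let v := oja_iter phi x eta v0 j in
            v + (eta * dotv (phi (x j.+1)) v) *: phi (x j.+1)
  end.

(* Main.v *)
Require Import Defs.
From HB Require Import structures.
From mathcomp Require Import all_boot all_order all_algebra.
From mathcomp Require Import ring lra.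
Import Order.TTheory GRing.Theory Num.Theory.
Local Open Scope ring_scope.

Lemma dotv_ge0 (R : rcfType) d (v : 'rV[R]_d) : 0 <= dotv v v.
Proof. by rewrite /dotv; apply: sumr_ge0 => k _; rewrite -expr2 sqr_ge0. Qed.

Lemma dotv_expand (R : rcfType) d (v p : 'rV[R]_d) (c : R) :
  dotv (v + c *: p) (v + c *: p) =
  dotv v v + 2 * c * dotv p v + c ^+ 2 * dotv p p.
Proof.
rewrite /dotv !mulr_sumr -!big_split /=; apply: eq_bigr => k _.
rewrite !mxE; ring.
Qed.

Lemma key (R : rcfType) (d : nat) (X : Type) (phi : X -> 'rV[R]_d)
    (x : nat -> X) (eta : R) (v0 : 'rV[R]_d) (n : nat) (heta0 : 0 < eta) :
  eta * (\sum_(1 <= i < n.+1)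
                (dotv (phi (x i)) (oja_iter phi x eta v0 i.-1)) ^+ 2)
  <= dotv (oja_iter phi x eta v0 n) (oja_iter phi x eta v0 n).
Proof.
elim: n => [|n IH].
  by rewrite big_geq // mulr0 dotv_ge0.
rewrite big_nat_recr //= dotv_expand.
set a := dotv _ (oja_iter _ _ _ _ n).
set S := \sum_(_ <= _ < _) _ in IH *.
set D := dotv (oja_iter _ _ _ _ n) _ in IH *.
have hp := @dotv_ge0 _ _ (phi (x n.+1)).

have h1 : 0 <= (eta * a) ^+ 2 * dotv (phi (x n.+1)) (phi (x n.+1)).
  by apply: mulr_ge0 => //; rewrite sqr_ge0.
have h2 : 0 <= eta * a ^+ 2 by apply: mulr_ge0; [lra| rewrite sqr_ge0].
have -> : 2 * (eta * a) * a = 2 * (eta * a ^+ 2) by ring.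
nra.
Qed.

Theorem lemmaC7 (R : rcfType) (d : nat) (X : Type) (phi : X -> 'rV[R]_d)
    (x : nat -> X) (eta : R) (v0 : 'rV[R]_d) (n : nat)
    (heta0 : 0 < eta) (heta1 : eta < 1 / 10) (hv0 : v0 != 0) :
  norm2 (oja_iter phi x eta v0 n) >=
    Num.sqrt eta *
    Num.sqrt (\sum_(1 <= i < n.+1)
                (dotv (phi (x i)) (oja_iter phi x eta v0 i.-1)) ^+ 2).
Proof.
rewrite /norm2 -sqrtrM; last exact: ltW.
by rewrite ler_sqrt ?dotv_ge0 // key.
Qed.
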